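(* Let $P$ be an ergodic and reversible transition matrix on a finite set $\mathcal{X}$. Then $\gamma_{\mathsf{dps}}=\gamma_\star$.
   Context: $P$ is row-stochastic, ergodic (primitive), with unique stationary distribution $\pi>0$, and reversible: $\pi(x)P(x,x')=\pi(x')P(x',x)$; then $P$ has real spectrum and $\gamma_\star=1-\max\{|\lambda|:\lambda\in\sigma(P),\lambda\ne1\}$ is its absolute spectral gap. $P^\star(x,x')=\pi(x')P(x',x)/\pi(x)$; for a transition matrix $Q$ with stationary $\pi$, $\mathscr{S}_\pi(Q)=\begin{pmatrix}0&Q\\Q^\star&0\end{pmatrix}$ and $\gamma_\ddagger(Q)=1-\mu_2$ where $\mu_2$ is the second largest eigenvalue (counted with multiplicity) of $\mathscr{S}_\pi(Q)$. $\gamma_{\mathsf{dps}}=\max_{k\ge1}\gamma_\ddagger(P^k)/k$. *)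

(* Defs.v *)
From HB Require Import structures.
From mathcomp Require Import all_boot all_order all_algebra.
From mathcomp Require Import reals.
Set Implicit Arguments. Unset Strict Implicit. Unset Printing Implicit Defensive.
Import Order.TTheory GRing.Theory Num.Theory.
Local Open Scope ring_scope.

Section Defs.
Variable R : realType.

Definition row_stochastic n (P : 'M[R]_n) : Prop :=
  (forall i j, 0 <= P i j) /\ (forall i, \sum_j P i j = 1).

(* ergodic = primitive: some power has all entries positive *)
Definition primitive n (P : 'M[R]_n) : Prop :=
  exists k : nat, forall i j, 0 < (P ^+ k) i j.

Definition stationary n (P : 'M[R]_n) (pi : 'I_n -> R) : Prop :=
  (forall i, 0 <= pi i) /\ (\sum_i pi i = 1) /\
  (forall j, \sum_i pi i * P i j = pi j).

Definition reversible n (P : 'M[R]_n) (pi : 'I_n -> R) : Prop :=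
  forall i j, pi i * P i j = pi j * P j i.

Definition tstar n (pi : 'I_n -> R) (Q : 'M[R]_n) : 'M[R]_n :=
  \matrix_(i, j) (pi j * Q j i / pi i).

Definition dilation n (pi : 'I_n -> R) (Q : 'M[R]_n) : 'M[R]_(n + n) :=
  block_mx 0 Q (tstar pi Q) 0.

(* mu is the second largest eigenvalue of A, eigenvalues counted with
   (algebraic) multiplicity: s lists all real roots of the characteristic
   polynomial with multiplicity, and mu is the second entry of s sorted
   in decreasing order. *)
Definition second_largest_eig m (A : 'M[R]_m) (mu : R) : Prop :=
  exists (s : seq R) (q : {poly R}),
    char_poly A = q * \prod_(x <- s) ('X - x%:P) /\
    (forall x, ~~ root q x) /\
    (1 < size s)%N /\
    mu = nth 0 (sort (fun x y => y <= x) s) 1.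

Definition gamma_ddagger n (pi : 'I_n -> R) (Q : 'M[R]_n) (g : R) : Prop :=
  exists mu, second_largest_eig (dilation pi Q) mu /\ g = 1 - mu.

Definition abs_spectral_gap n (P : 'M[R]_n) (g : R) : Prop :=
  exists lam, eigenvalue P lam /\ lam != 1 /\ g = 1 - `|lam| /\
    (forall lam', eigenvalue P lam' -> lam' != 1 -> `|lam'| <= `|lam|).

Definition gamma_dps n (pi : 'I_n -> R) (P : 'M[R]_n) (g : R) : Prop :=
  (exists k : nat, (0 < k)%N /\
     exists gk, gamma_ddagger pi (P ^+ k) gk /\ gk / k%:R = g) /\
  (forall k : nat, (0 < k)%N ->
     forall gk, gamma_ddagger pi (P ^+ k) gk -> gk / k%:R <= g).

End Defs.

(* Main.v *)
Set Warnings "-notation-overridden,-ambiguous-paths,-notation-incompatible-prefix".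
Require Import Defs.
From HB Require Import structures.
From mathcomp Require Import all_boot all_order all_algebra.
From mathcomp Require Import reals.
From mathcomp Require Import complex.
From mathcomp Require Import zify ring.
Import Order.TTheory GRing.Theory Num.Theory.
Local Open Scope ring_scope.

Lemma stoch_pow {R : realType} {n} {P : 'M[R]_n} : row_stochastic P ->
  forall m, row_stochastic (P ^+ m).
Proof.
move=> [P0 P1]; elim=> [|m [IH0 IH1]].
  rewrite expr0; split=> [i j|i]; first by rewrite mxE ler0n.
  rewrite (bigD1 i) //= big1 ?addr0 => [|j /negbTE ji]; rewrite mxE ?eqxx //.
  by rewrite eq_sym ji.
rewrite exprS -mulmxE; split=> [i j|i].
  by rewrite mxE; apply: sumr_ge0 => k _; rewrite mulr_ge0.
under eq_bigr do rewrite mxE.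
rewrite exchange_big /=.
under eq_bigr do rewrite -mulr_sumr IH1 mulr1.
exact: P1.
Qed.

Lemma pos_shift {R : realType} {n} {P : 'M[R]_n} a : row_stochastic P ->
  (forall i j, 0 < (P ^+ a) i j) -> forall b i j, 0 < (P ^+ (b + a)) i j.
Proof.
move=> hP hpos b i j; have [B0 B1] := stoch_pow hP b.
rewrite exprD -mulmxE mxE.
rewrite lt_def sumr_ge0 ?andbT; last by move=> k _; rewrite mulr_ge0 // ltW.
have Hge : forall k, true -> 0 <= (P ^+ b) i k * (P ^+ a) k j.
  by move=> k _; exact: mulr_ge0 (B0 _ _) (ltW (hpos _ _)).
apply/negP => /eqP/(psumr_eq0P Hge) H.
have : \sum_k (P ^+ b) i k = 0.
  apply: big1 => k _; have /eqP := H k isT.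
  by rewrite mulf_eq0 (gt_eqF (hpos _ _)) orbF => /eqP.
by rewrite B1 => /eqP; rewrite oner_eq0.
Qed.

Lemma maxprin {R : realType} {n} (M : 'M[R]_n) :
  (forall i, \sum_j M i j = 1) -> (forall i j, 0 < M i j) ->
  forall u : 'cV[R]_n, M *m u = u -> forall i j, u i 0 = u j 0.
Proof.
move=> M1 Mpos u Mu i j.
have [i0 _ Hmax] : exists2 i0, true & forall k, u k 0 <= u i0 0.
  case: (@arg_maxP _ _ _ i xpredT (fun k => u k 0)) => // i0 _ H.
  by exists i0 => // k; apply: H.
have E : \sum_k M i0 k * (u i0 0 - u k 0) = 0.
  under eq_bigr do rewrite mulrBr.
  rewrite sumrB -mulr_suml M1 mul1r.
  have := congr1 (fun A : 'cV[R]_n => A i0 0) Mu; rewrite mxE => ->.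
  by rewrite subrr.
have Hge : forall k, true -> 0 <= M i0 k * (u i0 0 - u k 0).
  by move=> k _; rewrite mulr_ge0 ?subr_ge0 // ltW.
have Hk : forall k, u k 0 = u i0 0.
  move=> k; have /eqP := (@psumr_eq0P _ _ _ _ Hge E k isT).
  rewrite mulf_eq0 (gt_eqF (Mpos _ _)) /= subr_eq0 => /eqP ->//.
by rewrite !Hk.
Qed.


Lemma right_eig {R : realType} {n} {P : 'M[R]_n} (pi : 'I_n -> R) :
  reversible P pi -> (forall i, 0 < pi i) ->
  forall (v : 'rV[R]_n) a, v *m P = a *: v ->
  P *m (\col_i (v 0 i / pi i)) = a *: \col_i (v 0 i / pi i).
Proof.
move=> hrev hpos v a hv; apply/colP => i; rewrite !mxE.
have pn k : pi k != 0 by rewrite gt_eqF.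
have -> : \sum_j P i j * (\col_i0 (v 0 i0 / pi i0)) j 0 =
          (\sum_j v 0 j * P j i) / pi i.
  rewrite mulr_suml; apply: eq_bigr => j _; rewrite mxE.
  have e : P i j = pi j * P j i / pi i.
    by rewrite -hrev [pi i * _]mulrC mulrK // unitfE.
  rewrite e; field; by rewrite ?pn.
have := congr1 (fun A : 'rV[R]_n => A 0 i) hv; rewrite !mxE => ->.
by rewrite mulrA.
Qed.

Lemma pow_right {R : realType} {n} (M : 'M[R]_n) (u : 'cV[R]_n) a :
  M *m u = a *: u -> forall k, M ^+ k *m u = a ^+ k *: u.
Proof.
move=> hu; elim=> [|k IH]; first by rewrite !expr0 scale1r; exact: mul1mx.
by rewrite exprS -mulmxE -mulmxA IH -scalemxAr hu scalerA -exprSr.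
Qed.

Lemma left1 {R : realType} {n} {P : 'M[R]_n} (pi : 'I_n -> R) :
  row_stochastic P -> primitive P -> reversible P pi -> (forall i, 0 < pi i) ->
  forall v : 'rV[R]_n, v *m P = v -> forall i j, v 0 i / pi i = v 0 j / pi j.
Proof.
move=> hP [m hm] hrev hpos v hv i j.
have hv' : v *m P = 1 *: v by rewrite scale1r.
have := @pow_right _ _ _ _ _ (right_eig _ hrev hpos _ _ hv') m; rewrite expr1n scale1r => hu.
have [_ S1] := stoch_pow hP m.
move: (maxprin _ S1 hm _ hu i j); rewrite !mxE; done.
Qed.

Lemma rank_P1 {R : realType} {n} {P : 'M[R]_n} (pi : 'I_n -> R) (j0 : 'I_n) :
  row_stochastic P -> primitive P -> reversible P pi -> (forall i, 0 < pi i) ->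
  (n - 1 <= \rank (P - 1%:M)%R)%N.
Proof.
move=> hP hprim hrev hpos.
pose pr : 'rV[R]_n := \row_i pi i.
have sub : (kermx (P - 1%:M) <= pr)%MS.
  apply/row_subP => k; set r := row k (kermx (P - 1%:M)).
  have hr : r *m P = r.
    have : r *m (P - 1%:M) = 0 by rewrite /r -row_mul mulmx_ker row0.
    by rewrite mulmxBr mulmx1 => /eqP; rewrite subr_eq0 => /eqP.
  have -> : r = (r 0 j0 / pi j0) *: pr.
    apply/rowP => i; move: (left1 _ hP hprim hrev hpos _ hr i j0).
    rewrite /r !mxE => <-.
    by rewrite mulrVK // unitfE gt_eqF.
  by rewrite scalemx_sub.
have := mxrankS sub; have := rank_leq_row pr; rewrite mxrank_ker.
move=> h1 h2; have := leq_trans h2 h1. 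
by rewrite leq_subLR addnC -leq_subLR.
Qed.

Lemma eig_lt1 {R : realType} {n} {P : 'M[R]_n} (pi : 'I_n -> R) :
  row_stochastic P -> primitive P -> reversible P pi -> (forall i, 0 < pi i) ->
  forall lam, eigenvalue P lam -> lam != 1 -> `|lam| < 1.
Proof.
move=> hP [m hm] hrev hpos lam /eigenvalueP [v hv vn0] lamn1.
pose u : 'cV[R]_n := \col_i (v 0 i / pi i).
have hu : P *m u = lam *: u by exact: right_eig.
have un0 : exists i, u i 0 != 0.
  apply/existsP; move: vn0; apply: contraR; rewrite negb_exists => /forallP H.
  apply/eqP/rowP => i; have := H i; rewrite !mxE negbK mulf_eq0 invr_eq0.
  by rewrite (gt_eqF (hpos i)) orbF => /eqP.
clearbody u.
have [P0 P1] := hP.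
rewrite ltNge; apply/negP => H1.
have [lam_eq|lam_gt] := eqVneq `|lam| 1; last first.
  have lg : 1 < `|lam| by rewrite lt_def H1 andbT.
  case: un0 => i ui.
  have [i0 _ Hmax] : exists2 i0, true & forall k, `|u k 0| <= `|u i0 0|.
    case: (@arg_maxP _ _ _ i xpredT (fun k => `|u k 0|)) => // i0 _ H.
    by exists i0 => // k; apply: H.
  have : `|lam| * `|u i0 0| <= `|u i0 0|.
    rewrite -normrM.
    have := congr1 (fun A : 'cV[R]_n => A i0 0) hu; rewrite !mxE => <-.
    apply: le_trans (ler_norm_sum _ _ _) _.
    rewrite -[X in _ <= X]mul1r -(P1 i0) mulr_suml.
    apply: ler_sum => k _; rewrite normrM (ger0_norm (P0 _ _)).
    exact: (ler_wpM2l (P0 i0 k) (Hmax k)).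
  rewrite -[X in _ <= X]mul1r => H.
  have : `|u i0 0| <= 0.
    rewrite leNgt; apply/negP => hpos0.
    by move: H; rewrite ler_pM2r // leNgt lg.
  rewrite normr_le0 => /eqP ui0.
  by move: ui; have := Hmax i; rewrite ui0 normr0 normr_le0 => ->.
have lamN1 : lam = -1.
  case: (ler0P lam) => hl.
    by apply/eqP; rewrite -eqr_oppLR -(ler0_norm hl) lam_eq.
  by move: lamn1; rewrite -(gtr0_norm hl) lam_eq eqxx.
have hm2 := pos_shift _ hP hm m.
have [_ S1] := stoch_pow hP (m + m).
have hu2 := pow_right _ _ _ hu (m + m).
have e1 : (-1 : R) ^+ (m + m) = 1 by rewrite addnn -mul2n exprM sqrrN !expr1n.
rewrite lamN1 e1 scale1r in hu2.
have hc := maxprin _ S1 hm2 _ hu2.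
case: un0 => i ui.
have := congr1 (fun A : 'cV[R]_n => A i 0) hu; rewrite !mxE.
under eq_bigr do rewrite (hc _ i).
rewrite -mulr_suml P1 mul1r lamN1 mulN1r => /eqP.
rewrite -subr_eq0 opprK -mulr2n mulrn_eq0 /= => /eqP ui0.
by move: ui; rewrite ui0 eqxx.
Qed.

Lemma CP_sim {F : fieldType} {n} (X Y A : 'M[F]_n) :
  X *m Y = 1%:M -> char_poly (X *m A *m Y) = char_poly A.
Proof.
move=> XY; rewrite /char_poly /char_poly_mx.
have -> : 'X%:M - map_mx polyC (X *m A *m Y) =
   map_mx polyC X *m ('X%:M - map_mx polyC A) *m map_mx polyC Y.
  rewrite mulmxBr mulmxBl -!map_mxM mul_mx_scalar -scalemxAl -map_mxM XY.
  by rewrite map_mx1 scalemx1.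
by rewrite !det_mulmx mulrAC -det_mulmx -map_mxM XY map_mx1 det1 mul1r.
Qed.

Lemma CP_diag {F : fieldType} {n} (d : 'rV[F]_n) :
  char_poly (diag_mx d) = \prod_i ('X - (d 0 i)%:P).
Proof.
rewrite char_poly_trig ?diag_mx_is_trig //.
by apply: eq_bigr => i _; rewrite mxE eqxx mulr1n.
Qed.



Local Open Scope complex_scope.

Lemma sym_roots {R : realType} {n} (S : 'M[R]_n) : (forall i j, S i j = S j i) ->
  exists e : 'I_n -> R,
   [/\ char_poly S = \prod_i ('X - (e i)%:P),
       char_poly (- S) = \prod_i ('X - (- e i)%:P) &
       forall i j, i != j -> e i = 1 -> e j = 1 ->
         (\rank (S - 1%:M)%R <= n - 2)%N].
Proof.
move=> Ssym.
pose toC := real_complex R.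
pose A := map_mx toC S.
have Aherm : A \is hermsymmx.
  apply: realsym_hermsym.
    apply/is_hermitianmxP; rewrite expr0 scale1r; apply/matrixP => i j.
    by rewrite !mxE /= Ssym.
  by apply/mxOverP => i j; rewrite mxE; apply/complex_realP; exists (S i j).
have /orthomx_spectralP hA := hermitian_normalmx Aherm.
set M := spectralmx A in hA; set d := spectral_diag A in hA.
have Mu : M \in unitmx := spectral_unit A.
have dreal : forall i, d 0 i = (complex.Re (d 0 i))%:C.
  move=> i; have /mxOverP/(_ 0 i) := hermitian_spectral_diag_real Aherm.
  by move=> /RRe_real ->.
exists (fun i => complex.Re (d 0 i)); split.
- apply: (map_poly_inj toC); rewrite map_char_poly -/A hA CP_sim ?mulVmx //.
  rewrite CP_diag rmorph_prod; apply: eq_bigr => i _.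
  by rewrite /= map_polyXsubC; congr (_ - _%:P); exact: dreal.
- apply: (map_poly_inj toC); rewrite map_char_poly map_mxN -/A hA.
  rewrite -mulNmx -mulmxN -raddfN /= CP_sim ?mulVmx //.
  rewrite CP_diag rmorph_prod; apply: eq_bigr => i _.
  rewrite /= map_polyXsubC mxE; congr (_ - _); rewrite (rmorphN toC) /= -dreal; by rewrite ?rmorphN ?polyCN.
move=> i j ij ei ej.
have di : d 0 i = 1 by rewrite dreal /= ei.
have dj : d 0 j = 1 by rewrite dreal /= ej.
pose f (a : 'I_2) := if a == 0 then i else j.
have finj : injective f.
  move=> a b; rewrite /f.
  case: (a =P 0) => [->|/eqP a0]; case: (b =P 0) => [->|/eqP b0] //.
  - by move=> /eqP; rewrite (negbTE ij).
  - by move=> /eqP; rewrite eq_sym (negbTE ij).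
  - by move=> _; apply/val_inj; move: a b a0 b0 => [[|[|a]] ?] [[|[|b]] ?].
pose E : 'M[R[i]]_(2, n) := \matrix_(a, k) (k == f a)%:R.
have ED : E *m diag_mx d = E.
  apply/matrixP => a k; rewrite mul_mx_diag !mxE.
  case: (k =P f a) => [->|]; last by rewrite mul0r.
  by rewrite /f; case: (a == 0); rewrite ?di ?dj mulr1.
have EE : E *m E^T = 1%:M.
  apply/matrixP => a b; rewrite !mxE.
  rewrite (bigD1 (f a)) //= big1 ?addr0.
    by rewrite !mxE eqxx mul1r (inj_eq finj) eq_sym.
  by move=> k /negbTE kfa; rewrite !mxE kfa mul0r.
have rE : (2 <= \rank E)%N.
  by apply: (@mulmx1_min_rank _ _ _ _ E 1%:M E^T); rewrite mul1mx.
have E'k : (E *m M <= kermx (A - 1%:M))%MS.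
  rewrite sub_kermx mulmxBr mulmx1 hA !mulmxA mulmxK //.
  by rewrite ED; apply/eqP; exact: subrr.
have := mxrankS E'k; rewrite mxrankMfree ?row_free_unit // mxrank_ker.
have -> : A - 1%:M = map_mx toC (S - 1%:M) by rewrite map_mxB map_mx1.
rewrite (mxrank_map toC) => h; have := leq_trans rE h.
move: (\rank (S - 1%:M)%R) => r; lia.
Qed.
Local Close Scope complex_scope.


Lemma CP_block {F : fieldType} {n} (Q : 'M[F]_n) :
  char_poly (block_mx 0 Q Q 0 : 'M_(n + n)) = char_poly Q * char_poly (- Q).
Proof.
rewrite /char_poly /char_poly_mx.
set x : 'M[{poly F}]_n := 'X%:M.
set B := map_mx polyC Q.
have -> : 'X%:M - map_mx polyC (block_mx 0 Q Q 0) = block_mx x (-B) (-B) x.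
  by rewrite map_block_mx map_mx0 (scalar_mx_block n n) opp_block_mx
    add_block_mx !oppr0 !addr0 !add0r.
have key : block_mx x (-B) (-B) x *m block_mx x 0 B 1%:M =
           block_mx (x *m x - B *m B) (-B) 0 x.
  rewrite mulmx_block !mulmx0 !mulmx1 !add0r !mulNmx.
  by rewrite /x (scalar_mxC _ B) addNr.
have dx : \det x != 0 by rewrite /x det_scalar expf_neq0 // polyX_eq0.
apply: (mulIf dx).
have := congr1 determinant key.
rewrite det_mulmx det_lblock det1 mulr1 det_ublock => ->.
congr (_ * _).
have -> : x *m x - B *m B = (x - B) *m (x - map_mx polyC (- Q)).
  rewrite map_mxN opprK -/B mulmxDr !mulmxBl /x scalar_mxC.
  by rewrite (scalar_mxC _ B) addrA subrK.
by rewrite det_mulmx.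
Qed.

Lemma ge_trans {R : realType} : transitive (fun x y : R => y <= x).
Proof. by move=> y x z h1 h2; apply: le_trans h2 h1. Qed.

Lemma ge_total {R : realType} : total (fun x y : R => y <= x).
Proof. by move=> x y; rewrite le_total. Qed.

Lemma SL1 {R : realType} (s : seq R) a b : a \in s -> b \in s -> b < a ->
  b <= nth 0 (sort (fun x y => y <= x) s) 1.
Proof.
move=> ha0 hb0 ba.
have st := sort_sorted (@ge_total R) s.
have ha : a \in sort (fun x y : R => y <= x) s by rewrite mem_sort.
have hb : b \in sort (fun x y : R => y <= x) s by rewrite mem_sort.
clear ha0 hb0.
case: (sort _ s) st ha hb => [|x0 [|x1 t']] st ha hb //.
  by move: ha hb ba; rewrite !inE => /eqP -> /eqP ->; rewrite ltxx.
rewrite /= leNgt; apply/negP => x1b.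
move: st => /= /andP [x10 pt].
have /allP ht := order_path_min (@ge_trans R) pt.
have hb0 : b = x0.
  move: hb; rewrite !inE => /orP [/eqP //|/orP [/eqP bx1|bt]].
    by move: x1b; rewrite bx1 ltxx.
  by have := ht _ bt; rewrite /= leNgt x1b.
have ha0 : a = x0.
  move: ha; rewrite !inE => /orP [/eqP //|/orP [/eqP ax1|at']].
    by move: ba; rewrite ax1 ltNge ltW.
  have := ht _ at'; rewrite /= => h.
  by move: ba; rewrite ltNge (le_trans h (ltW x1b)).
by move: ba; rewrite ha0 hb0 ltxx.
Qed.

Lemma SL2 {R : realType} (s : seq R) b : count_mem 1 s = 1%N -> b \in s -> b < 1 ->
  (forall x, x \in s -> x != 1 -> x <= b) ->
  nth 0 (sort (fun x y => y <= x) s) 1 = b.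
Proof.
move=> c1 bs b1 hx.
have one_s : 1 \in s by rewrite -has_pred1 has_count c1.
apply/eqP; rewrite eq_le (SL1 _ _ _ one_s bs b1) andbT.
have st := sort_sorted (@ge_total R) s.
have cs : count_mem 1 (sort (fun x y : R => y <= x) s) = 1%N.
  by rewrite count_sort.
have hx' : forall x, x \in sort (fun x y : R => y <= x) s -> x != 1 -> x <= b.
  by move=> x; rewrite mem_sort; apply: hx.
have one' : 1 \in sort (fun x y : R => y <= x) s by rewrite mem_sort.
have bs' : b \in sort (fun x y : R => y <= x) s by rewrite mem_sort.
case: (sort _ s) st cs hx' one' bs' => [|x0 [|x1 t']] st cs hx' one' bs' //.
  by move: one' bs'; rewrite !inE => /eqP <- /eqP bx; move: b1; rewrite bx ltxx.
rewrite /=; have [x11|x1n1] := eqVneq x1 1; last first.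
  by apply: hx' => //; rewrite !inE eqxx orbT.
move: st => /= /andP [x10 _].
have [x01|x0n1] := eqVneq x0 1.
  by move: cs => /=; rewrite x01 x11 eqxx.
have := hx' x0; rewrite inE eqxx => /(_ isT x0n1) hb.
by move: b1; rewrite ltNge (le_trans _ hb) // -x11.
Qed.

Lemma bern {R : realType} (b : R) k : 0 <= b -> b <= 1 ->
  1 - b ^+ k <= k%:R * (1 - b).
Proof.
move=> b0 b1; elim: k => [|k IH]; first by rewrite expr0 subrr mul0r.
rewrite exprS mulrSr mulrDl mul1r.
have -> : 1 - b * b ^+ k = (1 - b ^+ k) + b ^+ k * (1 - b).
  by rewrite mulrBr mulr1 addrA subrK mulrC.
apply: lerD => //; rewrite -[X in _ <= X]mul1r ler_wpM2r ?subr_ge0 //.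
exact: exprn_ile1.
Qed.

Lemma rev_pow {R : realType} {n} {P : 'M[R]_n} (pi : 'I_n -> R) :
  reversible P pi -> forall k, reversible (P ^+ k) pi.
Proof.
move=> hrev; elim=> [|k IH] i j.
  rewrite expr0 !mxE eq_sym; case: eqVneq => [->//|_]; by rewrite !mulr0n !mulr0.
rewrite [in LHS]exprS [in RHS]exprSr -!mulmxE !mxE !mulr_sumr.
apply: eq_bigr => l _.
by rewrite (mulrA (pi i)) hrev mulrAC IH -mulrA.
Qed.

Lemma tstar_rev {R : realType} {n} {Q : 'M[R]_n} (pi : 'I_n -> R) :
  reversible Q pi -> (forall i, 0 < pi i) -> tstar pi Q = Q.
Proof.
move=> hQ hpos; apply/matrixP => i j; rewrite mxE -hQ [pi i * _]mulrC mulrK //.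
by rewrite unitfE gt_eqF.
Qed.

Lemma pow_left {R : realType} {n} (M : 'M[R]_n) (v : 'rV[R]_n) a :
  v *m M = a *: v -> forall k, v *m M ^+ k = a ^+ k *: v.
Proof.
move=> hv; elim=> [|k IH]; first by rewrite !expr0 scale1r; exact: mulmx1.
by rewrite exprSr -mulmxE mulmxA IH -scalemxAl hv scalerA -exprSr.
Qed.

Lemma blk_eig {R : realType} {n} (Q : 'M[R]_n) (v : 'rV[R]_n) c :
  v *m Q = c *: v -> v != 0 -> eigenvalue (block_mx 0 Q Q 0 : 'M_(n + n)) `|c|.
Proof.
move=> hv vn0; apply/eigenvalueP.
case: (lerP 0 c) => hc.
  exists (row_mx v v); last by rewrite row_mx_eq0 negb_and vn0.
  by rewrite mul_row_block !mulmx0 add0r addr0 hv ger0_norm // scale_row_mx.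
exists (row_mx v (- v)); last by rewrite row_mx_eq0 negb_and vn0.
rewrite mul_row_block !mulmx0 add0r addr0 mulNmx hv ltr0_norm // scale_row_mx scaleNr.
by rewrite scaleNr scalerN opprK.
Qed.

Lemma in_roots {R : realType} {m} (D : 'M[R]_m) (q : {poly R}) s x :
  char_poly D = q * \prod_(y <- s) ('X - y%:P) -> (forall y, ~~ root q y) ->
  eigenvalue D x -> x \in s.
Proof.
by move=> hc hq; rewrite eigenvalue_root_char hc rootM (negbTE (hq x)) /= root_prod_XsubC.
Qed.

Lemma count_le1 {T : eqType} (p : pred T) (s : seq T) : uniq s ->
  (forall x y, x \in s -> y \in s -> p x -> p y -> x = y) -> (count p s <= 1)%N.
Proof.
elim: s => [|x s IH] //= /andP [xs us] h.
have h' : forall a b, a \in s -> b \in s -> p a -> p b -> a = b.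
  by move=> a b ha hb; apply: h; rewrite inE ?ha ?hb orbT.
case px: (p x) => /=; last by rewrite add0n IH.
rewrite (eq_in_count (a2 := pred0)) ?count_pred0 //.
move=> y ys /=; apply/negP => py.
have := h x y; rewrite !inE eqxx ys orbT => /(_ isT isT px py) exy.
by move: xs; rewrite exy ys.
Qed.

Lemma symmetrize {R : realType} {n} {P : 'M[R]_n} (pi : 'I_n -> R) :
  reversible P pi -> (forall i, 0 < pi i) ->
  exists S : 'M[R]_n, [/\ forall i j, S i j = S j i,
    char_poly S = char_poly P, char_poly (- S) = char_poly (- P) &
    \rank (S - 1%:M) = \rank (P - 1%:M)].
Proof.
move=> hrev hpos.
pose s i := Num.sqrt (pi i).
have sp i : 0 < s i by rewrite sqrtr_gt0.
have sn i : s i != 0 by rewrite gt_eqF.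
have s2 i : s i ^+ 2 = pi i by rewrite sqr_sqrtr // ltW.
pose Dh := diag_mx (\row_i s i); pose Dhi := diag_mx (\row_i (s i)^-1).
have DD : Dh *m Dhi = 1%:M.
  apply/matrixP => i j; rewrite mul_diag_mx !mxE.
  case: eqVneq => [->|_]; last by rewrite !mulr0n mulr0.
  by rewrite !mulr1n mulfV.
have [Dhu Dhiu] := mulmx1_unit DD.
exists (Dh *m P *m Dhi); split.
- move=> i j; rewrite mul_mx_diag mul_diag_mx !mxE.
  have e := hrev i j; rewrite -(s2 i) -(s2 j) in e.
  transitivity (s i ^+ 2 * P i j / (s i * s j)); first by field; rewrite ?sn.
  by rewrite e; field; rewrite ?sn.
- exact: CP_sim.
- by rewrite -mulNmx -mulmxN CP_sim.
- have -> : Dh *m P *m Dhi - 1%:M = Dh *m (P - 1%:M) *m Dhi.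
    by rewrite mulmxBr mulmxBl mulmx1 DD.
  rewrite mxrankMfree ?row_free_unit //.
  by rewrite (eqmxMfull _ (_ : row_full Dh)) // row_full_unit.
Qed.

Theorem mainTheorem15 (R : realType) (n : nat) (P : 'M[R]_n) (pi : 'I_n -> R)
  (hP : row_stochastic P) (hprim : primitive P)
  (hpi : stationary P pi) (hpos : forall i, 0 < pi i)
  (huniq : forall pi', stationary P pi' -> pi' =1 pi)
  (hrev : reversible P pi)
  (gstar : R) (hgstar : abs_spectral_gap P gstar) :
  gamma_dps pi P gstar.
Proof.
move: hgstar => [lam [lam_eig [lamn1 [-> lam_max]]]].
have [pi0 [pi1 pist]] := hpi.
have hb : `|lam| < 1 := eig_lt1 pi hP hprim hrev hpos lam lam_eig lamn1.
have b0 : 0 <= `|lam| := normr_ge0 _.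
pose pr : 'rV[R]_n := \row_i pi i.
have prP : pr *m P = 1 *: pr.
  apply/rowP => j; rewrite scale1r !mxE -(pist j).
  by apply: eq_bigr => i _; rewrite !mxE.
have prn0 : pr != 0.
  apply/negP => /eqP h.
  have e0 : \sum_i pr 0 i = 1 by rewrite -pi1; apply: eq_bigr => i _; rewrite mxE.
  move: e0; rewrite h; under eq_bigr do rewrite mxE.
  by rewrite big1_eq => /eqP; rewrite eq_sym oner_eq0.
have n0 : (0 < n)%N.
  rewrite lt0n; apply/eqP => n0; move: pi1; subst n.
  by rewrite big_ord0 => /eqP; rewrite eq_sym oner_eq0.
pose j0 : 'I_n := Ordinal n0.
have rank1 := rank_P1 pi j0 hP hprim hrev hpos.
have [S [Ssym cS cNS rS]] := symmetrize pi hrev hpos.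
have [e [ce cNe e1]] := sym_roots S Ssym.
pose es := [seq e i | i <- enum 'I_n].
have cP : char_poly P = \prod_(x <- es) ('X - x%:P).
  by rewrite -cS ce big_map big_enum.
have cNP : char_poly (- P) = \prod_(x <- es) ('X - (- x)%:P).
  by rewrite -cNS cNe big_map big_enum.
have es_eig x : x \in es -> eigenvalue P x.
  by rewrite eigenvalue_root_char cP root_prod_XsubC.
have eig_es x : eigenvalue P x -> x \in es.
  by rewrite eigenvalue_root_char cP root_prod_XsubC.
have lam_abs x : x \in es -> x != 1 -> `|x| <= `|lam|.
  by move=> /es_eig; exact: lam_max.
have c1 : count_mem 1 es = 1%N.
  apply/eqP; rewrite eqn_leq; apply/andP; split.
    rewrite count_map; apply: count_le1; first exact: enum_uniq.
    move=> i j _ _ /= /eqP ei /eqP ej.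
    case: (eqVneq i j) => // ij; have := e1 i j ij ei ej; rewrite rS => h.
    exfalso; move: rank1 h (ltn_ord i) (ltn_ord j) (ij : (i : nat) != j).
    move: (\rank (P - 1%:M)%R) (nat_of_ord i) (nat_of_ord j) => r a b; lia.
  rewrite -has_count has_pred1; apply: eig_es; apply/eigenvalueP.
  by exists pr.
have cN1 : count_mem 1 (map -%R es) = 0%N.
  rewrite count_map; apply/eqP; rewrite -leqn0 leqNgt -has_count.
  apply/hasPn => x /es_eig hx /=; apply/negP => /eqP hx1.
  have xe : x = -1 by rewrite -hx1 opprK.
  have := eig_lt1 pi hP hprim hrev hpos x hx.
  rewrite xe normrN normr1 ltxx => H.
  suff : false by []; apply: H.
  by rewrite lt_eqF // (lt_trans (ltrN10 R) ltr01).
split.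
  exists 1%N; split => //; exists (1 - `|lam|); split; last by rewrite divr1.
  exists `|lam|; split => //.
  rewrite expr1 /dilation (tstar_rev pi hrev hpos).
  exists (es ++ map -%R es), 1; split; [|split; [|split]].
  - rewrite CP_block cP cNP mul1r big_cat /=; congr (_ * _); by rewrite big_map.
  - by move=> x; rewrite root1.
  - by rewrite size_cat /es !size_map -?enumT size_enum_ord; lia.
  apply/esym/SL2.
  - by rewrite count_cat c1 cN1.
  - case: (lerP 0 lam) => hl.
      by rewrite ger0_norm // mem_cat eig_es.
    by rewrite ltr0_norm // mem_cat map_f ?orbT // eig_es.
  - exact: hb.
  move=> x; rewrite mem_cat => /orP [xe|/mapP [y ye ->]] xn1.
    exact: le_trans (ler_norm x) (lam_abs x xe xn1).
  case: (eqVneq y 1) => [->|yn1]; first exact: le_trans (lerN10 R) b0.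
  by apply: le_trans (ler_norm _) _; rewrite normrN; apply: lam_abs.
move=> k k0 gk [mu [[s [q [hc [hq [hs ->]]]]] ->]].
rewrite /dilation (tstar_rev pi (rev_pow pi hrev k) hpos) in hc.
have in1 : 1 \in s.
  apply: (in_roots _ _ _ _ hc hq).
  have := pow_left _ _ _ prP k; rewrite expr1n => h.
  by have := blk_eig _ _ _ h prn0; rewrite normr1.
have inb : `|lam| ^+ k \in s.
  apply: (in_roots _ _ _ _ hc hq).
  move: lam_eig => /eigenvalueP [v hv vn0].
  have := blk_eig _ _ _ (pow_left _ _ _ hv k) vn0; by rewrite normrX.
have hbk : `|lam| ^+ k < 1 by rewrite exprn_ilt1 // -lt0n.
have hmu := SL1 s 1 _ in1 inb hbk.
rewrite ler_pdivrMr ?ltr0n // mulrC.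
apply: le_trans (bern _ k b0 (ltW hb)).
by rewrite lerD2l lerN2.
Qed.
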